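(* Let $G$ be a group satisfying the law $[x^2,y^2]=1$ (i.e. $[g^2,h^2]=1$ for all $g,h\in G$), and suppose the Klein bottle group $K=\langle a,b\mid b^{-1}ab=a^{-1}\rangle$ is a subgroup of $G$. Then every element of the normal closure $\langle\langle b^2\rangle\rangle$ of $b^2$ in $G$ commutes with every element of $K$.
   Context: $[x,y]=x^{-1}y^{-1}xy$. The normal closure $\langle\langle X\rangle\rangle$ of a subset $X$ of $G$ is the smallest normal subgroup of $G$ containing $X$. *)

(* Defs.v *)
From Stdlib Require Import ZArith.
Open Scope Z_scope.

Record is_group {G : Type} (mul : G -> G -> G) (one : G) (inv : G -> G) : Prop := {
  grp_assoc : forall x y z, mul x (mul y z) = mul (mul x y) z;
  grp_mul1 : forall x, mul one x = x;
  grp_mul1r : forall x, mul x one = x;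
  grp_mulV : forall x, mul (inv x) x = one;
  grp_mulVr : forall x, mul x (inv x) = one
}.

Definition commutator {G : Type} (mul : G -> G -> G) (inv : G -> G) (x y : G) : G :=
  mul (mul (mul (inv x) (inv y)) x) y.

Definition is_subgroup {G : Type} (mul : G -> G -> G) (one : G) (inv : G -> G)
  (H : G -> Prop) : Prop :=
  H one /\ (forall x y, H x -> H y -> H (mul x y)) /\ (forall x, H x -> H (inv x)).

Definition is_normal_subgroup {G : Type} (mul : G -> G -> G) (one : G) (inv : G -> G)
  (N : G -> Prop) : Prop :=
  is_subgroup mul one inv N /\ (forall g x, N x -> N (mul (mul (inv g) x) g)).

Definition normal_closure {G : Type} (mul : G -> G -> G) (one : G) (inv : G -> G)
  (X : G -> Prop) (g : G) : Prop :=
  forall N : G -> Prop, is_normal_subgroup mul one inv N ->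
    (forall x, X x -> N x) -> N g.

Definition is_hom {G H : Type} (mulG : G -> G -> G) (mulH : H -> H -> H) (f : G -> H) : Prop :=
  forall x y, f (mulG x y) = mulH (f x) (f y).

(* The Klein bottle group K = < a, b | b^{-1} a b = a^{-1} >, realised by its
   normal forms a^m b^n, (m,n) in Z x Z (the semidirect product Z x| Z):
   b^n a^p = a^{(-1)^n p} b^n, hence
   (a^m b^n)(a^p b^q) = a^{m + (-1)^n p} b^{n+q}. *)
Definition Klein : Type := (Z * Z)%type.
Definition ksgn (n : Z) (p : Z) : Z := if Z.even n then p else - p.
Definition kmul (x y : Klein) : Klein :=
  (fst x + ksgn (snd x) (fst y), snd x + snd y).
Definition kone : Klein := (0, 0).
Definition kinv (x : Klein) : Klein := (- ksgn (snd x) (fst x), - snd x).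
Definition ka : Klein := (1, 0).
Definition kb : Klein := (0, 1).

(* Main.v *)
Require Import Defs.
From Stdlib Require Import ZArith Lia.

Definition gcomm {G : Type} (mul : G -> G -> G) (x y : G) : Prop := mul x y = mul y x.

Lemma g_inv_l {G} (mul : G -> G -> G) one inv (HG : is_group mul one inv) x y :
  mul (inv x) (mul x y) = y.
Proof. rewrite (grp_assoc _ _ _ HG), (grp_mulV _ _ _ HG), (grp_mul1 _ _ _ HG); reflexivity. Qed.
Lemma g_inv_r {G} (mul : G -> G -> G) one inv (HG : is_group mul one inv) x y :
  mul x (mul (inv x) y) = y.
Proof. rewrite (grp_assoc _ _ _ HG), (grp_mulVr _ _ _ HG), (grp_mul1 _ _ _ HG); reflexivity. Qed.

Lemma g_inv_uniq {G} (mul : G -> G -> G) one inv (HG : is_group mul one inv) x y :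
  mul x y = one -> inv x = y.
Proof.
  intro H. rewrite <- (grp_mul1r _ _ _ HG (inv x)), <- H, (g_inv_l _ _ _ HG). reflexivity.
Qed.
Lemma g_invK {G} (mul : G -> G -> G) one inv (HG : is_group mul one inv) x :
  inv (inv x) = x.
Proof. apply (g_inv_uniq _ _ _ HG). apply (grp_mulV _ _ _ HG). Qed.
Lemma g_invM {G} (mul : G -> G -> G) one inv (HG : is_group mul one inv) x y :
  inv (mul x y) = mul (inv y) (inv x).
Proof.
  apply (g_inv_uniq _ _ _ HG).
  rewrite <- (grp_assoc _ _ _ HG), (g_inv_r _ _ _ HG), (grp_mulVr _ _ _ HG). reflexivity.
Qed.
Lemma g_inv1 {G} (mul : G -> G -> G) one inv (HG : is_group mul one inv) :
  inv one = one.
Proof. apply (g_inv_uniq _ _ _ HG). apply (grp_mul1 _ _ _ HG). Qed.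

Ltac gsimpl HG :=
  repeat first
   [ rewrite (g_invM _ _ _ HG)
   | rewrite (g_invK _ _ _ HG)
   | rewrite (g_inv1 _ _ _ HG)
   | rewrite <- (grp_assoc _ _ _ HG)
   | rewrite (grp_mulV _ _ _ HG)
   | rewrite (grp_mulVr _ _ _ HG)
   | rewrite (g_inv_l _ _ _ HG)
   | rewrite (g_inv_r _ _ _ HG)
   | rewrite (grp_mul1 _ _ _ HG)
   | rewrite (grp_mul1r _ _ _ HG) ].

Lemma gcommM {G} (mul : G -> G -> G) one inv (HG : is_group mul one inv) t x y :
  gcomm mul t x -> gcomm mul t y -> gcomm mul t (mul x y).
Proof.
  unfold gcomm; intros H1 H2.
  rewrite (grp_assoc _ _ _ HG), H1, <- (grp_assoc _ _ _ HG), H2, (grp_assoc _ _ _ HG). reflexivity.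
Qed.
Lemma gcommV {G} (mul : G -> G -> G) one inv (HG : is_group mul one inv) t x :
  gcomm mul t x -> gcomm mul t (inv x).
Proof.
  unfold gcomm; intros H1.
  assert (E : mul (inv x) (mul (mul t x) (inv x)) = mul (inv x) (mul (mul x t) (inv x))) by (rewrite H1; reflexivity).
  revert E. gsimpl HG. intro E. rewrite E. reflexivity.
Qed.
Lemma gcommJ {G} (mul : G -> G -> G) one inv (HG : is_group mul one inv) u v x :
  gcomm mul u v -> gcomm mul (mul (mul (inv x) u) x) (mul (mul (inv x) v) x).
Proof.
  unfold gcomm; intros H. gsimpl HG. rewrite (grp_assoc _ _ _ HG u v), H. gsimpl HG. try reflexivity.
Qed.
Lemma gcomm_sym {G} (mul : G -> G -> G) x y : gcomm mul x y -> gcomm mul y x.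
Proof. unfold gcomm; auto. Qed.
Lemma gcomm_shift {G} (mul : G -> G -> G) one inv (HG : is_group mul one inv) t x y :
  gcomm mul t (mul x y) -> gcomm mul t y -> gcomm mul t x.
Proof.
  intros H1 H2. replace x with (mul (mul x y) (inv y)).
  - apply (gcommM _ _ _ HG); auto. apply (gcommV _ _ _ HG); auto.
  - gsimpl HG. try reflexivity.
Qed.
Lemma gcomm_shiftl {G} (mul : G -> G -> G) one inv (HG : is_group mul one inv) t x y :
  gcomm mul t (mul x y) -> gcomm mul t x -> gcomm mul t y.
Proof.
  intros H1 H2. replace y with (mul (inv x) (mul x y)).
  - apply (gcommM _ _ _ HG); auto. apply (gcommV _ _ _ HG); auto.
  - gsimpl HG. try reflexivity.
Qed.

Lemma law_comm {G} (mul : G -> G -> G) one inv (HG : is_group mul one inv) A B :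
  commutator mul inv A B = one -> gcomm mul A B.
Proof.
  unfold commutator, gcomm; intro H.
  assert (E : mul B (mul A (mul (mul (mul (inv A) (inv B)) A) B)) = mul B (mul A one)) by (rewrite H; reflexivity).
  revert E. gsimpl HG. auto.
Qed.

Theorem mainTheorem4
  (G : Type) (mul : G -> G -> G) (one : G) (inv : G -> G)
  (HG : is_group mul one inv)
  (Hlaw : forall g h : G, commutator mul inv (mul g g) (mul h h) = one)
  (phi : Klein -> G)
  (Hhom : is_hom kmul mul phi)
  (Hinj : forall x y : Klein, phi x = phi y -> x = y) :
  forall g : G,
    normal_closure mul one inv (fun x => x = mul (phi kb) (phi kb)) g ->
    forall k : Klein, mul g (phi k) = mul (phi k) g.
Proof.
  set (A := phi ka). set (B := phi kb). set (t := mul B B).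
  assert (Hsq : forall g h, gcomm mul (mul g g) (mul h h)) by (intros; apply (law_comm _ _ _ HG); auto).
  assert (HAB : mul (mul A B) (mul A B) = t).
  { unfold t, A, B. rewrite <- (Hhom ka kb), <- (Hhom (kmul ka kb)), <- (Hhom kb kb). reflexivity. }
  assert (Hz : forall z, mul z z = t -> gcomm mul t z).
  { intros z Ez. rewrite <- Ez. unfold gcomm. rewrite (grp_assoc _ _ _ HG). reflexivity. }
  assert (Hwzw : forall w z, mul z z = t -> gcomm mul t (mul (mul w z) w)).
  { intros w z Ez. apply (gcomm_shift _ _ _ HG _ _ z).
    - replace (mul (mul (mul w z) w) z) with (mul (mul w z) (mul w z)) by (gsimpl HG; try reflexivity).
      unfold t. apply Hsq.
    - apply Hz; auto. }
  assert (HCB : forall w, gcomm mul t (mul (mul w B) (inv w))).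
  { intro w. apply (gcomm_shiftl _ _ _ HG _ (mul (inv w) (inv w))).
    - replace (mul (mul (inv w) (inv w)) (mul (mul w B) (inv w))) with (mul (mul (inv w) B) (inv w))
        by (gsimpl HG; try reflexivity).
      apply Hwzw. reflexivity.
    - unfold t. apply Hsq. }
  assert (HCA : forall w, gcomm mul t (mul (mul w A) (inv w))).
  { intro w. apply (gcomm_shift _ _ _ HG _ _ (mul (mul w B) w)).
    - replace (mul (mul (mul w A) (inv w)) (mul (mul w B) w)) with (mul (mul w (mul A B)) w)
        by (gsimpl HG; try reflexivity).
      apply Hwzw; auto.
    - apply Hwzw. reflexivity. }
  assert (P1 : phi kone = one).
  { assert (E : mul (phi kone) (phi kone) = phi kone) by (rewrite <- Hhom; reflexivity).
    assert (E2 : mul (inv (phi kone)) (mul (phi kone) (phi kone)) = mul (inv (phi kone)) (phi kone)) by (rewrite E; reflexivity).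
    revert E2. gsimpl HG. auto. }
  set (C := fun y => forall w, gcomm mul t (mul (mul w y) (inv w))).
  assert (CM : forall x y, C x -> C y -> C (mul x y)).
  { intros x y Hx Hy w. replace (mul (mul w (mul x y)) (inv w))
      with (mul (mul (mul w x) (inv w)) (mul (mul w y) (inv w))) by (gsimpl HG; try reflexivity).
    apply (gcommM _ _ _ HG); auto. }
  assert (CV : forall x, C x -> C (inv x)).
  { intros x Hx w. replace (mul (mul w (inv x)) (inv w)) with (inv (mul (mul w x) (inv w)))
      by (gsimpl HG; try reflexivity).
    apply (gcommV _ _ _ HG); auto. }
  assert (Hm : forall m : Z, C (phi (m, 0%Z))).
  { assert (S : forall m, phi (Z.succ m, 0%Z) = mul (phi (m,0%Z)) A).
    { intro m. unfold A. rewrite <- Hhom. unfold kmul, ka, ksgn; simpl. f_equal. }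
    intro m. induction m using Z.peano_ind.
    - change (0%Z, 0%Z) with kone. rewrite P1. intro w. gsimpl HG. unfold gcomm. gsimpl HG. try reflexivity.
    - rewrite S. apply CM; auto; try apply HCA.
    - replace (phi (Z.pred m, 0%Z)) with (mul (phi (m,0%Z)) (inv A)).
      + apply CM; auto; try (apply CV, HCA).
      + rewrite <- (Z.succ_pred m) at 1. rewrite S. gsimpl HG. try reflexivity. }
  assert (Hn : forall n : Z, C (phi (0%Z, n))).
  { assert (S : forall n, phi (0%Z, Z.succ n) = mul (phi (0%Z, n)) B).
    { intro n. unfold B. rewrite <- Hhom. unfold kmul, kb, ksgn; simpl.
      destruct (Z.even n); simpl; f_equal; lia. }
    intro n. induction n using Z.peano_ind.
    - change (0%Z, 0%Z) with kone. rewrite P1. intro w. gsimpl HG. unfold gcomm. gsimpl HG. try reflexivity.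
    - rewrite S. apply CM; auto; try apply HCB.
    - replace (phi (0%Z, Z.pred n)) with (mul (phi (0%Z, n)) (inv B)).
      + apply CM; auto; try (apply CV, HCB).
      + rewrite <- (Z.succ_pred n) at 1. rewrite S. gsimpl HG. try reflexivity. }
  assert (Hall : forall k, C (phi k)).
  { intros [m n]. replace (m, n) with (kmul (m, 0%Z) (0%Z, n)).
    - rewrite Hhom. apply CM; auto.
    - unfold kmul, ksgn; simpl. f_equal; lia. }
  intros g Hg.
  set (N := fun g => forall x k, gcomm mul (mul (mul (inv x) g) x) (phi k)).
  assert (HN : N g).
  { apply Hg.
    - split; [split; [|split]|].
      + intros x k. gsimpl HG. unfold gcomm. gsimpl HG. try reflexivity.
      + intros u v Hu Hv x k.
        replace (mul (mul (inv x) (mul u v)) x) with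
          (mul (mul (mul (inv x) u) x) (mul (mul (inv x) v) x)) by (gsimpl HG; try reflexivity).
        apply gcomm_sym, (gcommM _ _ _ HG); apply gcomm_sym; auto.
      + intros u Hu x k.
        replace (mul (mul (inv x) (inv u)) x) with (inv (mul (mul (inv x) u) x)) by (gsimpl HG; try reflexivity).
        apply gcomm_sym, (gcommV _ _ _ HG); apply gcomm_sym; auto.
      + intros h u Hu x k.
        replace (mul (mul (inv x) (mul (mul (inv h) u) h)) x) with
          (mul (mul (inv (mul h x)) u) (mul h x)) by (gsimpl HG; try reflexivity).
        apply Hu.
    - intros u -> x k. fold t.
      replace (phi k) with (mul (mul (inv x) (mul (mul x (phi k)) (inv x))) x) by (gsimpl HG; try reflexivity).
      apply (gcommJ _ _ _ HG). apply Hall. }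
  intro k. specialize (HN one k). revert HN. unfold gcomm. gsimpl HG. auto.
Qed.
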